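(* If $Q$ is a Jordan loop of order $9$ and $x\in Q$ satisfies $\langle x\rangle=Q$, then $Q=\{x^k:1\le k\le 9\}$ and $x^n=x^{(n\bmod 9)}$ for all integers $n\ge 0$.
   Context: A loop is a set $Q$ with a binary operation (juxtaposition) and neutral element $e$ such that for all $a,b$ the equations $ax=b$, $ya=b$ have unique solutions. A Jordan loop is a commutative loop satisfying $x^2(yx)=(x^2y)x$. For $k\ge 0$, $x^k$ denotes the right-associated product $x(x(\cdots(xe)\cdots))$ with $k$ factors $x$ (so $x^0=e$). $\langle x\rangle$ denotes the subloop generated by $x$. *)

(* Defs.v *)
From mathcomp Require Import all_boot.
Set Implicit Arguments. Unset Strict Implicit. Unset Printing Implicit Defensive.

Definition is_loop (T : finType) (op : T -> T -> T) (e : T) : Prop :=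
  (forall a, op e a = a /\ op a e = a) /\
  (forall a b, exists! x, op a x = b) /\
  (forall a b, exists! y, op y a = b).

Definition is_jordan_loop (T : finType) (op : T -> T -> T) (e : T) : Prop :=
  is_loop op e /\
  (forall a b, op a b = op b a) /\
  (forall x y, op (op x x) (op y x) = op (op (op x x) y) x).

Definition lpow (T : Type) (op : T -> T -> T) (e x : T) (k : nat) : T :=
  iter k (op x) e.

Definition is_subloop (T : finType) (op : T -> T -> T) (e : T) (S : {set T}) : Prop :=
  e \in S /\
  (forall a b, a \in S -> b \in S -> op a b \in S) /\
  (forall a b z, a \in S -> b \in S -> op a z = b -> z \in S) /\
  (forall a b z, a \in S -> b \in S -> op z a = b -> z \in S).

(* Membership in the subloop generated by x: y lies in every subloop
   containing x (i.e. in their intersection, which is <x>). *)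
Definition in_gen_subloop (T : finType) (op : T -> T -> T) (e x y : T) : Prop :=
  forall S : {set T}, is_subloop op e S -> x \in S -> y \in S.

(* Main.v *)
Require Import Defs.
From mathcomp Require Import all_boot.

Theorem lemma3p7 (T : finType) (op : T -> T -> T) (e x : T) :
  is_jordan_loop op e ->
  #|T| = 9 ->
  (forall y : T, in_gen_subloop op e x y) ->
  (forall y : T, exists k : nat, 1 <= k <= 9 /\ y = lpow op e x k) /\
  (forall n : nat, lpow op e x n = lpow op e x (n %% 9)).
Proof.
move=> [[Hid [Hl Hr]] [Hc HJ]] HT Hgen.
have lcan : forall a y z, op a y = op a z -> y = z.
  move=> a y z H; have [w [_ Hu]] := Hl a (op a y).
  by rewrite -(Hu y erefl) -(Hu z (esym H)).
have rcan : forall a y z, op y a = op z a -> y = z.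
  by move=> a y z; rewrite (Hc y) (Hc z); apply: lcan.
have jc : forall a y, op (op a a) (op a y) = op a (op (op a a) y).
  by move=> a y; rewrite (Hc a y) HJ Hc.
pose f := op x.
have finj : injective f by move=> y z; apply: lcan.
pose p k := iter k f e.
have pS : forall k, p k.+1 = op x (p k) by [].
have p1 : p 1 = x by rewrite /p /= /f (proj2 (Hid x)).
have p2e : p 2 = op x x by rewrite pS p1.
have P1 : forall k, op (p 1) (p k) = p (k + 1) by move=> k; rewrite p1 addn1.
have P2 : forall k, op (p 2) (p k) = p (k + 2).
  elim=> [|k IH]; first by rewrite (proj2 (Hid _)).
  by rewrite [p k.+1]pS p2e jc -p2e IH addSn.
have p4e : p 4 = op (p 2) (p 2) by rewrite P2.
have P4 : forall k, op (p 4) (p k) = p (k + 4).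
  have H : forall k, op (p 4) (p k) = p (k + 4) /\ op (p 4) (p k.+1) = p (k.+1 + 4).
    elim=> [|k [IH1 IH2]].
      split; first by rewrite (proj2 (Hid _)).
      by rewrite p1 Hc -pS.
    split=> //.
    have -> : p k.+2 = op (p 2) (p k) by rewrite P2 addn2.
    by rewrite p4e jc -p4e IH1 P2 !addSn addn2 addnS.
  by move=> k; case: (H k).
have p8e : p 8 = op (p 4) (p 4) by rewrite P4.
have P8sq : op (p 8) (p 8) = p 16.
  by rewrite {2}p8e p8e jc -p8e (Hc _ (p 4)) P4 P4.
pose n := order f e.
have pn : p n = e by apply: iter_order.
have pmod : forall k, p k = p (k %% n).
  move=> k; rewrite {1}(divn_eq k n); elim: (k %/ n) => [|q IH]; first by rewrite mul0n.
  by rewrite mulSn -addnA addnC /p iterD -/(p n) pn.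
have pinj : forall i j, i < n -> j < n -> p i = p j -> i = j.
  by move=> i j Hi Hj H; rewrite -(findex_iter Hi) -(findex_iter Hj) -/(p i) H.
pose S := [set y | y \in orbit f e].
have inS : forall y, (y \in S) <-> exists2 k, k < n & y = p k.
  move=> y; rewrite inE -fconnect_orbit; split.
    move=> H; exists (findex f e y); first exact: findex_max.
    by rewrite /p iter_findex.
  by case=> k _ ->; apply: fconnect_iter.
have pinS : forall k, p k \in S.
  move=> k; apply/inS; exists (k %% n); last exact: pmod.
  by rewrite ltn_mod order_gt0.
have cardS : #|S| = n.
  by rewrite cardsE (card_uniqP (orbit_uniq f e)) size_orbit.
have nle : n <= 9 by rewrite -cardS -HT max_card.
have p0 : p 0 = e by [].
have good : forall d k, d \in [:: 0; 1; 2; 4] -> op (p d) (p k) = p (k + d).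
  move=> d k; rewrite !inE => /or4P[] /eqP ->.
  - by rewrite addn0 p0 (proj1 (Hid _)).
  - exact: P1.
  - exact: P2.
  - exact: P4.
have divS : forall a, a \in S -> forall b, b \in S ->
    (forall y, y \in S -> op a y \in S) -> forall z, op a z = b -> z \in S.
  move=> a aS b bS cl z Hz.
  have sub : [set op a y | y in S] \subset S.
    by apply/subsetP=> w /imsetP[y yS ->]; apply: cl.
  have eqS : [set op a y | y in S] = S.
    apply/eqP; rewrite eqEcard sub card_imset ?leqnn //; move=> y1 y2; exact: lcan.
  move: bS; rewrite -{1}eqS => /imsetP[y yS Hy].
  have -> : z = y by apply: (lcan a); rewrite Hz Hy.
  exact: yS.
have closedS : (forall a b, a \in S -> b \in S -> op a b \in S) -> n = 9.
  move=> cl.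
  have sl : is_subloop op e S.
    split; first by rewrite -p0.
    split; first exact: cl.
    split.
      by move=> a b z aS bS; apply: divS => // y yS; apply: cl.
    move=> a b z aS bS Hz; rewrite Hc in Hz.
    by apply: (divS a aS b bS) => // y yS; apply: cl.
  have allS : forall y, y \in S by move=> y; apply: Hgen; rewrite // -p1.
  rewrite -cardS -HT; apply/eqP; rewrite eqn_leq max_card /=.
  by apply/subset_leq_card/subsetP=> y _; apply: allS.
have n9 : n = 9.
  have [//|n9] := eqVneq n 9.
  have nlt : n < 9 by rewrite ltn_neqAle n9 nle.
  have [n5|n6] := leqP n 5.
    apply: closedS => a b /inS[i Hi ->] /inS[j Hj ->].
    have G : forall d k, d \in [:: 0;1;2;4] -> op (p d) (p k) \in S.
      by move=> d k H; rewrite good.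
    have i5 : i < 5 by apply: leq_trans n5.
    have j5 : j < 5 by apply: leq_trans n5.
    case: i i5 Hi => [|[|[|[|[|i]]]]] // _ Hi; try by apply: G.
    rewrite Hc.
    case: j j5 Hj => [|[|[|[|[|j]]]]] // _ Hj; try by apply: G.
    have [n4|n4] := eqVneq n 4.
      have pn4 : p 4 = e by rewrite -n4.
      set u := p 3.
      have := HJ u x.
      rewrite /u -pS pn4 (proj2 (Hid _)) -/u (Hc _ u) => H.
      have Hw := lcan u _ _ H.
      have : op x (op u u) = op x (p 2).
        by rewrite (Hc x) -Hw /u.
      by move/lcan ->.
    have n5' : n = 5 by apply/eqP; rewrite eqn_leq n5 /=; rewrite ltn_neqAle eq_sym n4 Hi.
    have -> : p 3 = p 8 by rewrite (pmod 8) n5'.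
    by rewrite P8sq.
  case: (pickP (fun r => r \notin S)) => [r rS|H]; last first.
    have : #|S| >= 9.
      by rewrite -HT; apply/subset_leq_card/subsetP=> y _; move: (H y) => /= /negbFE.
    by rewrite cardS leqNgt nlt.
  have dn : forall d, d \in [:: 1;2;4] -> d < n.
    by move=> d; rewrite !inE => /or3P[] /eqP ->; apply: leq_trans n6.
  have dg : forall d, d \in [:: 1;2;4] -> d \in [:: 0;1;2;4].
    by move=> d; rewrite !inE => /or3P[] /eqP ->.
  have out : forall d, d \in [:: 1;2;4] -> op (p d) r \notin S.
    move=> d Hd; apply/negP => /inS[k Hk Hkp].
    have : op (p d) r = op (p d) (p (k + (n - d))).
      rewrite good ?dg // -addnA subnK; last exact: ltnW (dn d Hd).
      by rewrite Hkp /p iterD -/(p n) pn.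
    by move/lcan => Er; move: rS; rewrite /= Er pinS.
  have ne0 : forall d, d \in [:: 1;2;4] -> op (p d) r != r.
    move=> d Hd; apply/eqP => H.
    have : op (p d) r = op e r by rewrite H (proj1 (Hid _)).
    move/rcan; rewrite -p0 => /pinj H0.
    have := H0 (dn d Hd) (order_gt0 _ _).
    by move: Hd => /[swap] ->.
  have ne : forall d d', d \in [:: 1;2;4] -> d' \in [:: 1;2;4] -> d != d' ->
      op (p d) r != op (p d') r.
    move=> d d' Hd Hd' Hdd; apply/eqP => /rcan /pinj H.
    by move: Hdd; rewrite H ?eqxx //; apply: dn.
  pose X := [:: r; op (p 1) r; op (p 2) r; op (p 4) r].
  have uX : uniq X.
    have U : forall (r0 a0 b0 c0 : T), r0 != a0 -> r0 != b0 -> r0 != c0 ->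
        a0 != b0 -> a0 != c0 -> b0 != c0 -> uniq [:: r0; a0; b0; c0].
      move=> r0 a0 b0 c0 h1 h2 h3 h4 h5 h6.
      by rewrite /= !inE !negb_or h1 h2 h3 h4 h5 h6.
    apply: U; rewrite 1?eq_sym; try apply: ne0; try apply: ne; by [].
  have sX : {subset X <= ~: S}.
    move=> y; rewrite /X !in_cons in_nil orbF in_setC => /or4P[] /eqP ->; [exact: rS | apply: out..]; by rewrite !inE.
  have c4 : size X = 4 by [].
  have cle : #|X| <= #|~: S| by apply/subset_leq_card/subsetP.
  move: cle; rewrite (card_uniqP uX) c4 => cle.
  have E := cardsC S.
  move: E; rewrite cardS HT => E.
  have : n + 4 <= 9 by rewrite -E leq_add2l.
  by rewrite leqNgt (leq_trans _ (leq_add n6 (leqnn 4))).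
have allS : forall y, y \in S.
  have -> : S = setT by apply/eqP; rewrite eqEcard subsetT cardsT cardS n9 HT.
  by move=> y; rewrite in_setT.
split.
  move=> y; have [k kn ->] := proj1 (inS y) (allS y).
  case: k kn => [|k] kn.
    exists 9; split=> //.
    by rewrite /lpow -/(p 9) -n9 pn.
  exists k.+1; split=> //.
  by rewrite -n9 (ltnW kn).
move=> m; rewrite /lpow -/(p m) -/(p (m %% 9)) -n9; exact: pmod.
Qed.
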